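(* Let $G$ be a finite undirected graph and $\tau\ge1$, $k$ integers. Then the $(k+1,\tau)$-truss of $G$ is contained in the $(k,\tau)$-truss of $G$.
   Context: Graphs are finite, simple, undirected and unweighted; paths may repeat vertices and their length is the number of edges. For vertices $v,u$ of a graph $H$, $u$ is $\tau$-hop reachable from $v$ in $H$ if there is a path between them in $H$ of length at most $\tau$. $N_\tau(v,H)$ is the set of vertices $u\ne v$ that are $\tau$-hop reachable from $v$ in $H$. For an edge $e=(u,v)$ of $H$, $\Delta_\tau(e,H)=N_\tau(u,H)\cap N_\tau(v,H)$ and $\mathrm{sup}_\tau(e,H)=|\Delta_\tau(e,H)|$. The $(k,\tau)$-truss of $G$ is the maximal subgraph $G'$ of $G$ such that $\mathrm{sup}_\tau(e,G')\ge k-2$ for every edge $e\in E(G')$ (supports computed inside $G'$) and no more edges of $G$ can be added while keeping this property; a subgraph is determined by its edge set. *)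

(* Defs.v *)
From mathcomp Require Import all_boot all_order all_algebra.
Set Implicit Arguments. Unset Strict Implicit. Unset Printing Implicit Defensive.
Import Order.TTheory GRing.Theory Num.Theory.

(* An edge is an unordered pair, represented as the 2-element set [set u; v].
   A subgraph is determined by its edge set E : {set {set T}}. *)

Definition simple_graph (T : finType) (adj : rel T) : Prop :=
  symmetric adj /\ irreflexive adj.

Definition edges (T : finType) (adj : rel T) : {set {set T}} :=
  [set [set x.1; x.2] | x in [set x : T * T | adj x.1 x.2]].

Definition sadj (T : finType) (E : {set {set T}}) : rel T :=
  fun u v => (u != v) && ([set u; v] \in E).

Definition hop_reach (T : finType) (E : {set {set T}}) (tau : nat) (v u : T) : bool :=
  [exists n : 'I_tau.+1, exists p : n.-tuple T,
     path (sadj E) v p && (last v p == u)].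

Definition Nhood (T : finType) (E : {set {set T}}) (tau : nat) (v : T) : {set T} :=
  [set u | (u != v) && hop_reach E tau v u].

Definition support (T : finType) (E : {set {set T}}) (tau : nat) (u v : T) : nat :=
  #|Nhood E tau u :&: Nhood E tau v|.

Definition truss_cond (T : finType) (E : {set {set T}}) (k : int) (tau : nat) : Prop :=
  forall u v : T, u != v -> [set u; v] \in E ->
    (k - 2 <= (support E tau u v)%:Z)%R.

Definition is_truss (T : finType) (adj : rel T) (k : int) (tau : nat)
    (E : {set {set T}}) : Prop :=
  E \subset edges adj /\ truss_cond E k tau /\
  (forall E' : {set {set T}}, E \subset E' -> E' \subset edges adj ->
     truss_cond E' k tau -> E' = E).

(* Main.v *)
Require Import Defs.
From mathcomp Require Import all_boot all_order all_algebra.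
Import Order.TTheory GRing.Theory Num.Theory.

Lemma support_mono (T : finType) (E E' : {set {set T}}) tau u v :
  E \subset E' -> (Defs.support E tau u v <= Defs.support E' tau u v)%N.
Proof.
move=> sE; rewrite /Defs.support; apply: subset_leq_card.
have hN : forall w, Nhood E tau w \subset Nhood E' tau w.
  move=> w; apply/subsetP => x; rewrite !inE => /andP[-> /=].
  case/existsP => n /existsP [p /andP [hp hl]].
  apply/existsP; exists n; apply/existsP; exists p; rewrite hl andbT.
  apply: sub_path hp => a b; rewrite /sadj => /andP[-> /=] h.
  exact: (subsetP sE).
by apply: setISS; apply: hN.
Qed.

Theorem lemma1 (T : finType) (adj : rel T) (tau : nat) (k : int)
    (E1 E2 : {set {set T}}) :
  simple_graph adj -> (1 <= tau)%N ->
  is_truss adj (k + 1)%R tau E1 -> is_truss adj k tau E2 ->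
  E1 \subset E2.
Proof.
move=> _ _ [s1 [c1 _]] [s2 [c2 m2]].
have := m2 (E1 :|: E2) (subsetUr _ _).
rewrite subUset s1 s2 => /(_ isT) H.
suff hc : truss_cond (E1 :|: E2) k tau.
  by rewrite -(H hc) subsetUl.
move=> u v uv; rewrite inE => /orP [h|h].
- have := c1 u v uv h.
  have := @support_mono _ E1 (E1 :|: E2) tau u v (subsetUl E1 E2).
  rewrite -lez_nat => h1 h2.
  apply: (@le_trans _ _ ((k + 1) - 2)%R); last exact: le_trans h2 h1.
  all: idtac.
  by rewrite lerD2r lerDl.
- have := c2 u v uv h.
  have := @support_mono _ E2 (E1 :|: E2) tau u v (subsetUr E1 E2).
  rewrite -lez_nat => h1 h2.
  exact: le_trans h2 h1.
Qed.
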